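(* Let $m\neq n$ be nonzero integers and let $\varphi:Q(m,n)\to E(m,n)$ be the isomorphism defined below. Let $\sigma:Q(m,n)\to E(m,n)$ be the morphism extending $(X_0:X_1:X_2:X_3)\mapsto\bigl(X_0^2/X_1^2,\ X_0X_2X_3/X_1^3\bigr)$ (sending points with $X_1=0$ to the point at infinity). Then $\sigma(S)=-2\varphi(S)$ for every point $S$ of $Q(m,n)$, where $-2$ denotes the negative of the doubling map in the group law of $E(m,n)$. In particular, in the case $m=-n$, the morphism $\tau$ extending $(X_0:X_1:X_2:X_3)\mapsto\bigl(X_0^2/X_1^2,\ -X_0X_2X_3/X_1^3\bigr)$ satisfies $\tau(S)=2\varphi(S)$ for every point $S$ of $Q(-n,n)$.
   Context: $Q(m,n)\subset\mathbb{P}^3$ is the curve $X_0^2+mX_1^2=X_2^2,\ X_0^2+nX_1^2=X_3^2$ and $E(m,n)$ is the elliptic curve $y^2=x(x+m)(x+n)$ (projectively $Y^2T=X(X+mT)(X+nT)$ with coordinates $(T:X:Y)$), with neutral element the point at infinity. $\varphi:Q(m,n)\to E(m,n)$ is the isomorphism of curves extending the rational map $(X_0:X_1:X_2:X_3)\mapsto\bigl(nX_2-mX_3+(m-n)X_0\ :\ mn(X_3-X_2)\ :\ mn(m-n)X_1\bigr)$ (in coordinates $(T:X:Y)$). *)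

(* Defs.v *)
From HB Require Import structures.
From mathcomp Require Import all_boot all_order all_algebra all_field.
Set Implicit Arguments. Unset Strict Implicit. Unset Printing Implicit Defensive.
Import Order.TTheory GRing.Theory Num.Theory.
Local Open Scope ring_scope.

Section Curves.
Variable K : fieldType.

(* A point of P^3 is represented by a nonzero homogeneous coordinate vector
   (X0, X1, X2, X3); two vectors represent the same point iff they are
   proportional. *)
Definition vec4 := (K * K * K * K)%type.

Definition nonzero4 (v : vec4) : Prop :=
  let: (x0, x1, x2, x3) := v in ~ (x0 = 0 /\ x1 = 0 /\ x2 = 0 /\ x3 = 0).

Definition proj_eq4 (v w : vec4) : Prop :=
  exists2 c : K, c != 0 &
    let: (x0, x1, x2, x3) := v in w = (c * x0, c * x1, c * x2, c * x3).

Definition onQ (m n : K) (v : vec4) : Prop :=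
  nonzero4 v /\
  let: (x0, x1, x2, x3) := v in
  x0 ^+ 2 + m * x1 ^+ 2 = x2 ^+ 2 /\ x0 ^+ 2 + n * x1 ^+ 2 = x3 ^+ 2.

(* Points of E(m,n) : y^2 = x(x+m)(x+n).  None is the point at infinity
   (0:0:1) in coordinates (T:X:Y), i.e. the neutral element; Some (x,y) is
   the affine point (1:x:y). *)
Definition Ept := option (K * K).

Definition onE (m n : K) (P : Ept) : Prop :=
  match P with
  | None => True
  | Some (x, y) => y ^+ 2 = x * (x + m) * (x + n)
  end.

(* The projective point (T:X:Y) of P^2 (assumed nonzero and on E), written as
   an element of Ept: if T = 0 the only point of E is the point at infinity. *)
Definition of_proj (T X Y : K) : Ept :=
  if T == 0 then None else Some (X / T, Y / T).

(* Group law on E(m,n): y^2 = x^3 + (m+n) x^2 + mn x (chord-tangent law,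
   neutral element at infinity). *)
Definition Eneg (P : Ept) : Ept :=
  match P with None => None | Some (x, y) => Some (x, - y) end.

Definition Eadd (m n : K) (P Q : Ept) : Ept :=
  match P, Q with
  | None, _ => Q
  | _, None => P
  | Some (x1, y1), Some (x2, y2) =>
      if x1 == x2 then
        if y1 == - y2 then None
        else
          let l := (3%:R * x1 ^+ 2 + 2%:R * (m + n) * x1 + m * n) / (2%:R * y1) in
          let x3 := l ^+ 2 - (m + n) - x1 - x2 in
          Some (x3, l * (x1 - x3) - y1)
      else
        let l := (y2 - y1) / (x2 - x1) in
        let x3 := l ^+ 2 - (m + n) - x1 - x2 in
        Some (x3, l * (x1 - x3) - y1)
  end.

Definition phiT (m n : K) (v : vec4) : K :=
  let: (x0, x1, x2, x3) := v in n * x2 - m * x3 + (m - n) * x0.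
Definition phiX (m n : K) (v : vec4) : K :=
  let: (x0, x1, x2, x3) := v in m * n * (x3 - x2).
Definition phiY (m n : K) (v : vec4) : K :=
  let: (x0, x1, x2, x3) := v in m * n * (m - n) * x1.

(* "phi : Q(m,n) -> E(m,n) is the isomorphism of curves extending the
   rational map": phi is well defined on projective points, maps Q into E,
   is a bijection between the points of Q and of E, and agrees with the
   formula wherever the formula is defined. *)
Definition is_phi (m n : K) (phi : vec4 -> Ept) : Prop :=
  [/\ (forall v w, onQ m n v -> proj_eq4 v w -> phi v = phi w),
      (forall v, onQ m n v -> onE m n (phi v)),
      (forall v w, onQ m n v -> onQ m n w -> phi v = phi w -> proj_eq4 v w),
      (forall P, onE m n P -> exists2 v, onQ m n v & phi v = P)
    & (forall v, onQ m n v ->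
         ~ (phiT m n v = 0 /\ phiX m n v = 0 /\ phiY m n v = 0) ->
         phi v = of_proj (phiT m n v) (phiX m n v) (phiY m n v))].

Definition sigma (v : vec4) : Ept :=
  let: (x0, x1, x2, x3) := v in
  if x1 == 0 then None
  else Some (x0 ^+ 2 / x1 ^+ 2, x0 * x2 * x3 / x1 ^+ 3).

Definition tau (v : vec4) : Ept :=
  let: (x0, x1, x2, x3) := v in
  if x1 == 0 then None
  else Some (x0 ^+ 2 / x1 ^+ 2, - (x0 * x2 * x3) / x1 ^+ 3).

End Curves.

(* Main.v *)
Require Import Defs.
From HB Require Import structures.
From mathcomp Require Import all_boot all_order all_algebra all_field.
From mathcomp Require Import ring.
Import GRing.Theory Num.Theory.
Local Open Scope ring_scope.

Lemma ideal0 (q1 q2 P G1 G2 : algC) : G1 = 0 -> G2 = 0 -> P = q1*G1 + q2*G2 -> P = 0.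
Proof. by move=> -> -> ->; rewrite !mulr0 addr0. Qed.
Arguments ideal0 q1 q2 {P G1 G2}.

Lemma keyx (m n x0 x1 x2 x3 T X Y : algC) :
  T = n * x2 - m * x3 + (m - n) * x0 -> X = m * n * (x3 - x2) ->
  Y = m * n * (m - n) * x1 -> T != 0 -> Y != 0 -> x1 != 0 ->
  x0 ^+ 2 + m * x1 ^+ 2 = x2 ^+ 2 -> x0 ^+ 2 + n * x1 ^+ 2 = x3 ^+ 2 ->
  let x := X / T in let y := Y / T in
  let l := (3%:R * x ^+ 2 + 2%:R * (m + n) * x + m * n) / (2%:R * y) in
  (l ^+ 2 - (m + n) - x - x = x0 ^+ 2 / x1 ^+ 2) /\
  (- (l * (x - x0 ^+ 2 / x1 ^+ 2) - y) = x0 * x2 * x3 / x1 ^+ 3).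
Proof.
move=> HT HX HY T0 Y0 x10 E1 E2 x y l.
have G1 : x2 ^+ 2 - (x0 ^+ 2 + m * x1 ^+ 2) = 0 by rewrite E1 subrr.
have G2 : x3 ^+ 2 - (x0 ^+ 2 + n * x1 ^+ 2) = 0 by rewrite E2 subrr.
have two0 : (2%:R : algC) != 0 by rewrite pnatr_eq0.
pose L := 3%:R * X ^+ 2 + 2%:R * (m + n) * X * T + m * n * T ^+ 2.
split; apply/eqP; rewrite -subr_eq0; apply/eqP.
- have -> : l ^+ 2 - (m + n) - x - x - x0 ^+ 2 / x1 ^+ 2 =
     ((L ^+ 2 - 4%:R * (m + n) * Y ^+ 2 * T ^+ 2 - 8%:R * X * Y ^+ 2 * T) * x1 ^+ 2
      - x0 ^+ 2 * (4%:R * Y ^+ 2 * T ^+ 2)) / (4%:R * Y ^+ 2 * T ^+ 2 * x1 ^+ 2).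
    by rewrite /l /x /y /L; field; rewrite ?x10 ?T0 ?Y0 ?two0.
  apply/eqP; rewrite mulf_eq0; apply/orP; left; apply/eqP.
  apply: (ideal0 (28%:R * m^+4 * n^+4 * x1^+2 * x3^+2 + (-(18%:R)) * m^+3 * n^+5 * x1^+2 * x3^+2 + (-(12%:R)) * m^+4 * n^+4 * x1^+2 * x2 * x3 + (-(18%:R)) * m^+5 * n^+3 * x1^+2 * x3^+2 + 24%:R * m^+5 * n^+3 * x0 * x1^+2 * x3 + 12%:R * m^+3 * n^+5 * x1^+2 * x2 * x3 + (-(20%:R)) * m^+4 * n^+4 * x0 * x1^+2 * x3 + 1%:R * m^+4 * n^+4 * x1^+2 * x2^+2 + 4%:R * m^+5 * n^+3 * x1^+2 * x2 * x3 + (-(4%:R)) * m^+5 * n^+3 * x0 * x1^+2 * x2 + (-(2%:R)) * m^+3 * n^+5 * x1^+2 * x2^+2 + 8%:R * m^+4 * n^+4 * x0 * x1^+2 * x2 + (-(6%:R)) * m^+5 * n^+3 * x0^+2 * x1^+2 + (-(5%:R)) * m^+4 * n^+4 * x0^+2 * x1^+2 + 12%:R * m^+3 * n^+5 * x0^+2 * x1^+2 + 4%:R * m^+6 * n^+2 * x1^+2 * x3^+2 + (-(8%:R)) * m^+6 * n^+2 * x0 * x1^+2 * x3 + 4%:R * m^+6 * n^+2 * x0^+2 * x1^+2 + 4%:R * m^+2 * n^+6 * x1^+2 * x3^+2 + (-(4%:R)) * m^+2 * n^+6 * x1^+2 * x2 * x3 + 4%:R * m^+2 * n^+6 * x0 *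 x1^+2 * x3 + 1%:R * m^+2 * n^+6 * x1^+2 * x2^+2 + (-(4%:R)) * m^+3 * n^+5 * x0 * x1^+2 * x2 + (-(5%:R)) * m^+2 * n^+6 * x0^+2 * x1^+2 + 5%:R * m^+5 * n^+4 * x1^+4 + (-(14%:R)) * m^+4 * n^+5 * x1^+4 + 13%:R * m^+3 * n^+6 * x1^+4 + (-(4%:R)) * m^+2 * n^+7 * x1^+4) (1%:R * m^+4 * n^+4 * x1^+2 * x3^+2 + (-(12%:R)) * m^+4 * n^+4 * x1^+2 * x2 * x3 + (-(2%:R)) * m^+5 * n^+3 * x1^+2 * x3^+2 + 12%:R * m^+5 * n^+3 * x1^+2 * x2 * x3 + 4%:R * m^+3 * n^+5 * x1^+2 * x2 * x3 + (-(4%:R)) * m^+3 * n^+5 * x0 * x1^+2 * x3 + (-(20%:R)) * m^+4 * n^+4 * x0 * x1^+2 * x2 + 8%:R * m^+4 * n^+4 * x0 * x1^+2 * x3 + (-(6%:R)) * m^+5 * n^+3 * x0^+2 * x1^+2 + 23%:R * m^+4 * n^+4 * x0^+2 * x1^+2 + (-(24%:R)) * m^+3 * n^+5 * x0^+2 * x1^+2 + 24%:R * m^+3 * n^+5 * x0 * x1^+2 * x2 + 1%:R * m^+6 * n^+2 * x1^+2 * x3^+2 + (-(4%:R)) * m^+6 * n^+2 * x1^+2 * x2 * x3 + 4%:R * m^+6 * n^+2 * x0 * x1^+2 * x2 + (-(4%:R)) * m^+5 * n^+3 * x0 * x1^+2 * x3 + (-(1%:R)) * m^+6 * n^+2 *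 x0^+2 * x1^+2 + (-(8%:R)) * m^+2 * n^+6 * x0 * x1^+2 * x2 + 8%:R * m^+2 * n^+6 * x0^+2 * x1^+2 + (-(5%:R)) * m^+6 * n^+3 * x1^+4 + 14%:R * m^+5 * n^+4 * x1^+4 + (-(13%:R)) * m^+4 * n^+5 * x1^+4 + 4%:R * m^+3 * n^+6 * x1^+4) G1 G2).
  by rewrite /L HT HX HY; ring.
- have -> : - (l * (x - x0 ^+ 2 / x1 ^+ 2) - y) - x0 * x2 * x3 / x1 ^+ 3 =
     ((2%:R * Y ^+ 2 * T * x1 ^+ 2 - L * (X * x1 ^+ 2 - T * x0 ^+ 2)) * x1
      - 2%:R * Y * T ^+ 2 * (x0 * x2 * x3)) / (2%:R * Y * T ^+ 2 * x1 ^+ 3).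
    by rewrite /l /x /y /L; field; rewrite ?x10 ?T0 ?Y0 ?two0.
  apply/eqP; rewrite mulf_eq0; apply/orP; left; apply/eqP.
  apply: (ideal0 ((-(5%:R)) * m^+3 * n^+3 * x1^+3 * x3 + 5%:R * m^+2 * n^+3 * x0^+2 * x1 * x3 + 1%:R * m^+3 * n^+3 * x1^+3 * x2 + 1%:R * m^+2 * n^+3 * x0^+2 * x1 * x2 + (-(3%:R)) * m^+3 * n^+2 * x0^+2 * x1 * x3 + (-(1%:R)) * m^+3 * n^+2 * x0^+3 * x1 + 2%:R * m^+4 * n^+2 * x1^+3 * x3 + (-(2%:R)) * m^+4 * n^+2 * x0 * x1^+3 + 3%:R * m^+2 * n^+4 * x1^+3 * x3 + (-(2%:R)) * m * n^+4 * x0^+2 * x1 * x3 + (-(1%:R)) * m^+2 * n^+4 * x1^+3 * x2 + (-(1%:R)) * m * n^+4 * x0^+2 * x1 * x2 + 1%:R * m * n^+4 * x0^+3 * x1 + 2%:R * m^+3 * n^+3 * x0 * x1^+3 + (-(2%:R)) * m^+2 * n^+3 * x0 * x1 * x2 * x3 + 4%:R * m^+3 * n^+2 * x0 * x1 * x3^+2 + 2%:R * m * n^+4 * x0 * x1 * x2 * x3 + (-(4%:R)) * m^+2 * n^+3 * x0 * x1 * x3^+2) ((-(1%:R)) * m^+3 * n^+3 * x1^+3 * x3 + 5%:R * m^+3 * n^+3 * x1^+3 * x2 + 3%:R * m^+2 * n^+3 * x0^+2 * x1 * x2 + (-(1%:R)) * m^+3 * n^+2 * x0^+2 * x1 * x3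 + (-(3%:R)) * m^+2 * n^+3 * x0^+3 * x1 + (-(5%:R)) * m^+3 * n^+2 * x0^+2 * x1 * x2 + 1%:R * m^+4 * n^+2 * x1^+3 * x3 + (-(3%:R)) * m^+4 * n^+2 * x1^+3 * x2 + 1%:R * m^+4 * n * x0^+2 * x1 * x3 + (-(1%:R)) * m^+4 * n * x0^+3 * x1 + 2%:R * m^+4 * n * x0^+2 * x1 * x2 + (-(2%:R)) * m^+2 * n^+4 * x1^+3 * x2 + 2%:R * m^+2 * n^+4 * x0 * x1^+3 + (-(6%:R)) * m^+3 * n^+3 * x0 * x1^+3 + (-(2%:R)) * m^+4 * n * x0 * x1 * x2 * x3 + 2%:R * m^+3 * n^+2 * x0 * x1 * x2 * x3 + 4%:R * m^+3 * n^+2 * x0^+3 * x1 + 4%:R * m^+4 * n^+2 * x0 * x1^+3) G1 G2).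
  by rewrite /L HT HX HY; ring.
Qed.

Lemma Tzero (m n x0 x1 x2 x3 : algC) : m != 0 -> n != 0 -> m != n ->
  x0 ^+ 2 + m * x1 ^+ 2 = x2 ^+ 2 -> x0 ^+ 2 + n * x1 ^+ 2 = x3 ^+ 2 ->
  n * x2 - m * x3 + (m - n) * x0 = 0 -> [/\ x1 = 0, x2 = x0 & x3 = x0].
Proof.
move=> m0 n0 mn E1 E2 T0.
have G1 : x2 ^+ 2 - (x0 ^+ 2 + m * x1 ^+ 2) = 0 by rewrite E1 subrr.
have G2 : x3 ^+ 2 - (x0 ^+ 2 + n * x1 ^+ 2) = 0 by rewrite E2 subrr.
have hP : m ^+ 2 * (x3 - x0) * ((x2 - x0) - (x3 - x0)) = 0.
  have -> : m ^+ 2 * (x3 - x0) * ((x2 - x0) - (x3 - x0)) =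
    m * n * (x2 ^+ 2 - (x0 ^+ 2 + m * x1 ^+ 2)) - m ^+ 2 * (x3 ^+ 2 - (x0 ^+ 2 + n * x1 ^+ 2))
    - m * ((x2 - x0) + 2%:R * x0) * (n * x2 - m * x3 + (m - n) * x0) by ring.
  by rewrite G1 G2 T0 !mulr0 subrr subr0.
have x2e : x2 = x0.
  move/eqP: hP; rewrite !mulf_eq0 ?expf_eq0 ?(negbTE m0) /= => /orP [/eqP b0 | /eqP ab].
    have x3e : x3 = x0 by apply/eqP; rewrite -subr_eq0 b0.
    have : n * (x2 - x0) = 0 by rewrite -T0 x3e; ring.
    by move/eqP; rewrite mulf_eq0 (negbTE n0) /= subr_eq0 => /eqP.
  have x3e : x3 = x2.
    have : x2 - x3 = 0 by rewrite -ab; ring.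
    by move/eqP; rewrite subr_eq0 eq_sym => /eqP.
  have : (m - n) * (x0 - x2) = 0 by rewrite -T0 x3e; ring.
  move/eqP; rewrite mulf_eq0 subr_eq0 (negbTE mn) /= subr_eq0 => /eqP.
  by move=> ->.
have x3e : x3 = x0.
  have : m * (x0 - x3) = 0 by rewrite -T0 x2e; ring.
  by move/eqP; rewrite mulf_eq0 (negbTE m0) /= subr_eq0 eq_sym => /eqP.
split=> //.
have h : m * x1 ^+ 2 = x2 ^+ 2 - x0 ^+ 2 by rewrite -E1; ring.
move: h; rewrite x2e subrr => /eqP; rewrite mulf_eq0 (negbTE m0) /= expf_eq0 /=.
by move/eqP.
Qed.

Arguments Tzero {m n x0 x1 x2 x3}.
Arguments keyx {m n x0 x1 x2 x3 T X Y}.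

Lemma EnegK (P : Ept algC) : Eneg (Eneg P) = P.
Proof. by case: P => [[a b]|] //=; rewrite opprK. Qed.

Lemma tau_sigma (S : vec4 algC) : tau S = Eneg (sigma S).
Proof.
case: S => [[[x0 x1] x2] x3]; rewrite /tau /sigma /=.
by case: (x1 == 0) => //=; rewrite mulNr.
Qed.

Theorem mainTheorem4 (m n : int) :
  m != 0 -> n != 0 -> m != n ->
  forall phi : vec4 algC -> Ept algC,
    is_phi (m%:~R) (n%:~R) phi ->
    (forall S, onQ (m%:~R) (n%:~R) S ->
       sigma S = Eneg (Eadd (m%:~R) (n%:~R) (phi S) (phi S))) /\
    (m = - n ->
       forall S, onQ (m%:~R) (n%:~R) S ->
         tau S = Eadd (m%:~R) (n%:~R) (phi S) (phi S)).
Proof.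
move=> m0 n0 mn phi [Hwd HE Hinj Hsurj Hform].
have M0 : (m%:~R : algC) != 0 by rewrite intr_eq0.
have N0 : (n%:~R : algC) != 0 by rewrite intr_eq0.
have MN : (m%:~R : algC) != n%:~R by rewrite eqr_int.
set M := (m%:~R : algC) in M0 MN Hwd HE Hinj Hsurj Hform *.
set N := (n%:~R : algC) in N0 MN Hwd HE Hinj Hsurj Hform *.
clearbody M N.
have MN' : M - N != 0 by rewrite subr_eq0.
have Hdeg : forall x0, x0 != 0 -> phi (x0, 0, x0, x0) = None.
  move=> x0 x00 /=.
  have [[[[y0 y1] y2] y3] vQ pv] := Hsurj None I.
  have vQ' := vQ; case: vQ' => nzv [F1 F2].
  case: (eqVneq (phiT M N (y0, y1, y2, y3)) 0) => [T0|T0].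
    have [y10 y20 y30] := Tzero M0 N0 MN F1 F2 T0.
    subst y1 y2 y3.
    have y00 : y0 != 0 by apply/eqP => e; apply: nzv; rewrite e; do !split.
    rewrite -pv; symmetry; apply: Hwd => //.
    exists (x0 / y0); first by rewrite mulf_neq0 ?invr_eq0.
    by rewrite /= mulr0 divfK.
  have nd : ~ (phiT M N (y0, y1, y2, y3) = 0 /\ phiX M N (y0, y1, y2, y3) = 0 /\
               phiY M N (y0, y1, y2, y3) = 0).
    by case=> e _; rewrite e eqxx in T0.
  by move: (Hform _ vQ nd); rewrite pv /of_proj (negbTE T0).
have part1 : forall S, onQ M N S -> sigma S = Eneg (Eadd M N (phi S) (phi S)).
  move=> [[[x0 x1] x2] x3] SQ.
  have SQ' := SQ; case: SQ' => nz [E1 E2].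
  case: (eqVneq x1 0) => [x10|x10].
    subst x1.
    case: (eqVneq (phiT M N (x0, 0, x2, x3)) 0) => [T0|T0].
      have [_ e2 e3] := Tzero M0 N0 MN E1 E2 T0.
      subst x2 x3.
      have x00 : x0 != 0 by apply/eqP => e; apply: nz; rewrite e; do !split.
      by rewrite Hdeg // /sigma /= eqxx.
    have nd : ~ (phiT M N (x0, 0, x2, x3) = 0 /\ phiX M N (x0, 0, x2, x3) = 0 /\
               phiY M N (x0, 0, x2, x3) = 0).
      by case=> e _; rewrite e eqxx in T0.
    rewrite (Hform _ SQ nd) /of_proj (negbTE T0) /sigma /= eqxx.
    by rewrite !mulr0 !mul0r oppr0 !eqxx.
  have T0 : phiT M N (x0, x1, x2, x3) != 0.
    apply/eqP => T0; have [e _ _] := Tzero M0 N0 MN E1 E2 T0.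
    by rewrite e eqxx in x10.
  have Y0 : phiY M N (x0, x1, x2, x3) != 0 by rewrite /= !mulf_neq0.
  have nd : ~ (phiT M N (x0, x1, x2, x3) = 0 /\ phiX M N (x0, x1, x2, x3) = 0 /\
               phiY M N (x0, x1, x2, x3) = 0).
    by case=> e _; rewrite e eqxx in T0.
  rewrite (Hform _ SQ nd) /of_proj (negbTE T0) /sigma (negbTE x10).
  have yn : (phiY M N (x0, x1, x2, x3) / phiT M N (x0, x1, x2, x3) ==
            - (phiY M N (x0, x1, x2, x3) / phiT M N (x0, x1, x2, x3))) = false.
    apply/negbTE; rewrite -addr_eq0 -mulr2n mulrn_eq0 /=.
    by rewrite mulf_neq0 ?invr_eq0.
  rewrite /Eadd eqxx yn.
  have [k1 k2] := keyx (erefl _) (erefl _) (erefl _) T0 Y0 x10 E1 E2.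
  move: k1 k2; rewrite /= => k1 k2.
  by rewrite k1 k2.
split=> // _ S SQ.
by rewrite tau_sigma part1 // EnegK.
Qed.
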